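(* Let $G$ be a group with the unique root property. Suppose that for infinitely many primes $p$ there exists a subgroup $H$ of index $p$ in $G$ which is isomorphic to $G$. Then the abstract commensurator $\mathrm{Comm}(G)$ is not finitely generated.
   Context: A group $G$ has the unique root property if for all $x,y\in G$ and every positive integer $n$, $x^n=y^n$ implies $x=y$. The abstract commensurator $\mathrm{Comm}(G)$ is the group of equivalence classes of isomorphisms between finite-index subgroups of $G$, two such isomorphisms being equivalent if they agree on some finite-index subgroup of $G$ on which both are defined; the product of $\alpha:G_1\to G_1'$ and $\beta:G_2\to G_2'$ is $\alpha\beta:\alpha^{-1}(G_1'\cap G_2)\to\beta(G_1'\cap G_2)$. *)

(* Defs.v *)
From mathcomp Require Import all_boot.
Set Implicit Arguments. Unset Strict Implicit. Unset Printing Implicit Defensive.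

Record group := Group {
  carrier :> Type;
  gmul : carrier -> carrier -> carrier;
  ginv : carrier -> carrier;
  gone : carrier;
  gmulA : forall x y z, gmul x (gmul y z) = gmul (gmul x y) z;
  gmul1 : forall x, gmul gone x = x;
  gmulV : forall x, gmul (ginv x) x = gone
}.

Section Defs.
Variable G : group.

Fixpoint gpow (x : G) (n : nat) : G :=
  match n with 0 => gone G | n'.+1 => gmul x (gpow x n') end.

Definition unique_root : Prop :=
  forall (x y : G) (n : nat), 0 < n -> gpow x n = gpow y n -> x = y.

Definition subgroup (H : G -> Prop) : Prop :=
  H (gone G) /\ (forall x y, H x -> H y -> H (gmul x y)) /\
  (forall x, H x -> H (ginv x)).

Definition index_eq (H : G -> Prop) (n : nat) : Prop :=
  exists r : nat -> G,
    (forall x : G, exists i, i < n /\ H (gmul (ginv (r i)) x)) /\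
    (forall i j, i < n -> j < n -> H (gmul (ginv (r i)) (r j)) -> i = j).

Definition finite_index (H : G -> Prop) : Prop :=
  subgroup H /\ exists n, index_eq H n.

Definition iso_to_sub (H : G -> Prop) : Prop :=
  exists f : G -> G,
    (forall x y, f (gmul x y) = gmul (f x) (f y)) /\
    (forall x y, f x = f y -> x = y) /\
    (forall x, H (f x)) /\
    (forall y, H y -> exists x, f x = y).

(* Raw data of a partial map: domain, codomain, and the map (meaningful on
   the domain only). *)
Record pmap := PMap { pdom : G -> Prop; pcod : G -> Prop; pfun : G -> G }.

Definition commensuration (a : pmap) : Prop :=
  finite_index (pdom a) /\ finite_index (pcod a) /\
  (forall x y, pdom a x -> pdom a y ->
     pfun a (gmul x y) = gmul (pfun a x) (pfun a y)) /\
  (forall x y, pdom a x -> pdom a y -> pfun a x = pfun a y -> x = y) /\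
  (forall x, pdom a x -> pcod a (pfun a x)) /\
  (forall y, pcod a y -> exists x, pdom a x /\ pfun a x = y).

(* A set S of commensurations is closed when its image in Comm(G) is a
   subgroup and it is a union of equivalence classes.  The classes are
   expressed relationally:
   - c represents the identity class if c agrees with id on a finite-index
     subgroup K contained in dom c;
   - c represents the product ab (a first, then b; defined on
     a^{-1}(cod a ∩ dom b)) if c x = b (a x) on a finite-index subgroup K
     with K ⊆ dom c, K ⊆ dom a, a(K) ⊆ dom b;
   - c represents a^{-1} if c (a x) = x on a finite-index K ⊆ dom a with
     a(K) ⊆ dom c (i.e. the product a c is the identity class). *)
Definition comm_closed (S : pmap -> Prop) : Prop :=
  (forall c, commensuration c ->
     (exists K, finite_index K /\ (forall x, K x -> pdom c x) /\
        (forall x, K x -> pfun c x = x)) -> S c) /\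
  (forall a b c, commensuration a -> commensuration b -> commensuration c ->
     S a -> S b ->
     (exists K, finite_index K /\
        (forall x, K x -> pdom c x /\ pdom a x /\ pdom b (pfun a x)) /\
        (forall x, K x -> pfun c x = pfun b (pfun a x))) -> S c) /\
  (forall a c, commensuration a -> commensuration c -> S a ->
     (exists K, finite_index K /\
        (forall x, K x -> pdom a x /\ pdom c (pfun a x)) /\
        (forall x, K x -> pfun c (pfun a x) = x)) -> S c).

Definition comm_generated (n : nat) (gens : nat -> pmap) (c : pmap) : Prop :=
  forall S, comm_closed S -> (forall i, i < n -> S (gens i)) -> S c.

Definition comm_fin_gen : Prop :=
  exists (n : nat) (gens : nat -> pmap),
    (forall i, i < n -> commensuration (gens i)) /\
    (forall c, commensuration c -> comm_generated n gens c).

End Defs.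

(* Main.v *)
Require Import Defs.
From mathcomp Require Import all_boot.
From mathcomp Require Import zify.
From Stdlib Require Import Classical.
Set Implicit Arguments. Unset Strict Implicit. Unset Printing Implicit Defensive.

Lemma ltS_ne j s : j < s.+1 -> j <> s -> j < s.
Proof. lia. Qed.

Section Grp.
Variable G : group.
Local Notation mul := (@gmul G).
Local Notation inv := (@ginv G).
Local Notation one := (@gone G).

Lemma mulKg (x y : G) : mul (inv x) (mul x y) = y.
Proof. by rewrite gmulA gmulV gmul1. Qed.

Lemma mulgV (x : G) : mul x (inv x) = one.
Proof.
have h : mul (inv x) (mul x (inv x)) = inv x by rewrite gmulA gmulV gmul1.
by rewrite -[mul x (inv x)](mulKg (inv x)) h gmulV.
Qed.

Lemma mulg1 (x : G) : mul x one = x.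
Proof. by rewrite -(gmulV x) gmulA mulgV gmul1. Qed.

Lemma mulVKg (x y : G) : mul x (mul (inv x) y) = y.
Proof. by rewrite gmulA mulgV gmul1. Qed.

Lemma inv_uniq (u v : G) : mul u v = one -> u = inv v.
Proof. move=> h; by rewrite -[u]mulg1 -(mulgV v) gmulA h gmul1. Qed.

Lemma invgK (x : G) : inv (inv x) = x.
Proof. by symmetry; apply: inv_uniq; apply: mulgV. Qed.

Lemma invMg (x y : G) : inv (mul x y) = mul (inv y) (inv x).
Proof. symmetry; apply: inv_uniq. by rewrite -gmulA mulKg gmulV. Qed.

Lemma mulg_inj (x y z : G) : mul x y = mul x z -> y = z.
Proof. by move=> h; rewrite -(mulKg x y) h mulKg. Qed.

Lemma Kinv (K : G -> Prop) (a b : G) : subgroup K -> K (mul (inv a) b) -> K (mul (inv b) a).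
Proof. move=> [_ [_ hV]] h; have := hV _ h. by rewrite invMg invgK. Qed.

Lemma Kmul (K : G -> Prop) (a b c : G) : subgroup K -> K (mul (inv a) b) -> K (mul (inv b) c) ->
  K (mul (inv a) c).
Proof. move=> [_ [hM _]] h1 h2; have := hM _ _ h1 h2. by rewrite -gmulA mulVKg. Qed.

Definition index_in (A K : G -> Prop) (n : nat) : Prop :=
  exists r : nat -> G, (forall i, i < n -> A (r i)) /\
    (forall x, A x -> exists i, i < n /\ K (mul (inv (r i)) x)) /\
    (forall i j, i < n -> j < n -> K (mul (inv (r i)) (r j)) -> i = j).

Definition TT : G -> Prop := fun _ => True.

Lemma index_eq_in (K : G -> Prop) n : index_eq K n <-> index_in TT K n.
Proof.
split.
- move=> [r [h1 h2]]; exists r; split=> //; split=> // x _; exact: h1.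
- move=> [r [_ [h1 h2]]]; exists r; split=> // x; exact: h1.
Qed.

Lemma index_in_le A K m n : subgroup K -> index_in A K m -> index_in A K n -> m <= n.
Proof.
move=> sK [r [rA [rc rd]]] [s [sA [sc sd]]].
have : forall i : 'I_m, exists j : 'I_n, K (mul (inv (s j)) (r i)).
  move=> i; have [j [jn hj]] := sc _ (rA _ (ltn_ord i)).
  by exists (Ordinal jn).
move=> /fin_all_exists [f hf].
have injf : injective f.
  move=> i i' e; apply: val_inj; apply: rd; try exact: ltn_ord.
  apply: (Kmul sK (Kinv sK (hf i))); rewrite e; exact: hf.
by have := leq_card f injf; rewrite !card_ord.
Qed.

Lemma index_in_uniq A K m n : subgroup K -> index_in A K m -> index_in A K n -> m = n.
Proof.
move=> sK h1 h2; apply/eqP; rewrite eqn_leq.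
by rewrite (index_in_le sK h1 h2) (index_in_le sK h2 h1).
Qed.

Lemma idx_uniq (K : G -> Prop) m n : subgroup K -> index_eq K m -> index_eq K n -> m = n.
Proof. move=> sK /index_eq_in h1 /index_eq_in h2; exact: index_in_uniq sK h1 h2. Qed.

Lemma idx_pos (K : G -> Prop) n : index_eq K n -> 0 < n.
Proof. move=> [r [h1 _]]; have [i [hi _]] := h1 one; by case: n h1 hi. Qed.

Lemma idx_ext (P Q : G -> Prop) n : (forall x, P x <-> Q x) -> index_eq P n -> index_eq Q n.
Proof.
move=> e [r [h1 h2]]; exists r; split.
- move=> x; have [i [hi hk]] := h1 x; exists i; split=> //; exact/e.
- move=> i j hi hj hk; apply: h2=> //; exact/e.
Qed.

Lemma tower (B K : G -> Prop) t s : subgroup B -> (forall x, K x -> B x) ->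
  index_in TT B t -> index_in B K s -> index_in TT K (t * s).
Proof.
move=> [b1 [bM bV]] KB [g [_ [gc gd]]] [a [aB [ac ad]]].
exists (fun k => mul (g (k %/ s)) (a (k %% s))); split; [by []|split].
- move=> x _; have [i [hi hB]] := gc x I.
  have [j [hj hK]] := ac _ hB.
  exists (i * s + j); split.
    have : i * s + j < i * s + s by rewrite ltn_add2l.
    move=> h; apply: (leq_trans h); by rewrite -mulSnr leq_mul2r hi orbT.
  have s0 : 0 < s by exact: leq_ltn_trans (leq0n j) hj.
  rewrite divnMDl // divn_small // addn0 modnMDl modn_small //.
  by rewrite invMg -gmulA.
- move=> k l hk hl hK.
  have s0 : 0 < s by case: (posnP s) => [e|//]; rewrite e muln0 in hk.
  have hkB := KB _ hK.
  move: hK hkB; rewrite invMg -!gmulA.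
  set u := a (k %% s); set v := a (l %% s); set gk := g (k %/ s); set gl := g (l %/ s).
  move=> hK hB.
  have uB : B u by apply: aB; exact: ltn_pmod.
  have vB : B v by apply: aB; exact: ltn_pmod.
  have e1 : k %/ s = l %/ s.
    apply: gd; try by rewrite ltn_divLR.
    have := bM _ _ (bM _ _ uB hB) (bV _ vB).
    by rewrite mulVKg -!gmulA mulgV mulg1.
  have hK' : K (mul (inv u) v) by move: hK; rewrite /gk /gl e1 mulKg.
  have e2 : k %% s = l %% s by apply: ad; rewrite ?ltn_pmod.
  by rewrite (divn_eq k s) (divn_eq l s) e1 e2.
Qed.

Lemma restrict (B K : G -> Prop) n : subgroup K -> (forall x, K x -> B x) ->
  index_in TT K n -> exists s, index_in B K s.
Proof.
move=> sK KB [r [_ [rc rd]]].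
have main : forall n', n' <= n -> exists s (a : nat -> G),
   (forall j, j < s -> B (a j)) /\
   (forall j, j < s -> exists i, i < n' /\ K (mul (inv (r i)) (a j))) /\
   (forall j j', j < s -> j' < s -> K (mul (inv (a j)) (a j')) -> j = j') /\
   (forall i x, i < n' -> B x -> K (mul (inv (r i)) x) ->
       exists j, j < s /\ K (mul (inv (a j)) x)).
  elim=> [|n' IH] hn.
    by exists 0, (fun _ => one); split; [|split; [|split]].
  have [s [a [aB [ai [ad ac]]]]] := IH (ltnW hn).
  case: (classic (exists y, B y /\ K (mul (inv (r n')) y))).
  + move=> [y [yB yK]].
    exists s.+1, (fun j => if j == s then y else a j); split; [|split; [|split]].
    * move=> j hj; case: eqP => [//|ne]; apply: aB; exact: ltS_ne hj ne.
    * move=> j hj; case: eqP => [_|ne]; first by exists n'.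
      have hj' : j < s by exact: ltS_ne hj ne.
      have [i [hi hk]] := ai _ hj'; exists i; split=> //; exact: ltnW.
    * have cross : forall j, j < s -> ~ K (mul (inv (a j)) y).
        move=> j hj hk; have [i [hi hk']] := ai _ hj.
        have h := Kmul sK (Kmul sK hk' hk) (Kinv sK yK).
        have := rd _ _ (leq_trans hi (ltnW hn)) hn h. move=> e; by rewrite e ltnn in hi.
      move=> j j' hj hj'.
      case: eqP => [ej|nj]; case: eqP => [ej'|nj'] hk.
      - by rewrite ej ej'.
      - have hj2 : j' < s by exact: ltS_ne hj' nj'.
        by case: (cross _ hj2 (Kinv sK hk)).
      - have hj2 : j < s by exact: ltS_ne hj nj.
        by case: (cross _ hj2 hk).
      - apply: ad=> //.
        + exact: ltS_ne hj nj.
        + exact: ltS_ne hj' nj'.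
    * move=> i x hi xB hk.
      move: hi; rewrite ltnS leq_eqVlt => /orP [/eqP ei|hi].
      - exists s; rewrite eqxx; split=> //.
        rewrite ei in hk; exact: Kmul sK (Kinv sK yK) hk.
      - have [j [hj hk']] := ac _ _ hi xB hk.
        exists j; split; first exact: ltnW.
        by rewrite (ltn_eqF hj).
  + move=> nex; exists s, a; split=> //; split.
      move=> j hj; have [i [hi hk]] := ai _ hj; exists i; split=> //; exact: ltnW.
    split=> // i x hi xB hk.
    move: hi; rewrite ltnS leq_eqVlt => /orP [/eqP ei|hi].
    * by case: nex; exists x; rewrite -ei.
    * exact: ac hi xB hk.
have [s [a [aB [_ [ad ac]]]]] := main n (leqnn n).
exists s, a; split=> //; split=> // x xB.
have [i [hi hk]] := rc x I; exact: ac hi xB hk.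
Qed.

Definition img (f : G -> G) (K : G -> Prop) : G -> Prop :=
  fun y => exists x, K x /\ f x = y.

Section Hom.
Variables (A B : G -> Prop) (f : G -> G).
Hypotheses (sA : subgroup A)
  (fM : forall x y, A x -> A y -> f (mul x y) = mul (f x) (f y))
  (fI : forall x y, A x -> A y -> f x = f y -> x = y)
  (fAB : forall x, A x -> B (f x))
  (fS : forall y, B y -> exists x, A x /\ f x = y).

Lemma hom1 : f one = one.
Proof.
case: sA => a1 _.
have := fM a1 a1; rewrite gmul1 => h.
apply: (@mulg_inj (f one)); by rewrite mulg1 -h.
Qed.

Lemma homV x : A x -> f (inv x) = inv (f x).
Proof.
case: sA => [a1 [aM aV]] ax; apply: inv_uniq.
by rewrite -fM ?gmulV ?hom1 //; apply: aV.
Qed.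

Lemma img_sub K : subgroup K -> (forall x, K x -> A x) -> subgroup (img f K).
Proof.
move=> [k1 [kM kV]] KA; split; [|split].
- by exists one; rewrite hom1.
- move=> _ _ [x [kx <-]] [y [ky <-]]; exists (mul x y); split; first exact: kM.
  by rewrite fM; auto.
- move=> _ [x [kx <-]]; exists (inv x); split; first exact: kV.
  by rewrite homV; auto.
Qed.

Lemma transport K s : (forall x, K x -> A x) -> index_in A K s -> index_in B (img f K) s.
Proof.
case: sA => [a1 [aM aV]] KA [a [aA [ac ad]]].
exists (fun j => f (a j)); split; [|split].
- move=> j hj; apply: fAB; exact: aA.
- move=> y yB; have [x [ax <-]] := fS yB.
  have [j [hj hk]] := ac _ ax; exists j; split=> //.
  exists (mul (inv (a j)) x); split=> //.
  by rewrite fM ?homV //; auto.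
- move=> j j' hj hj' [z [kz e]].
  apply: ad=> //.
  have e' : z = mul (inv (a j)) (a j').
    apply: fI; auto. rewrite fM ?homV //; auto.
  by rewrite -e'.
Qed.
End Hom.

Lemma key (c : Defs.pmap G) (K : G -> Prop) k m n : commensuration c -> subgroup K ->
  (forall x, K x -> pdom c x) -> index_eq K k ->
  index_eq (pdom c) m -> index_eq (pcod c) n ->
  subgroup (img (pfun c) K) /\
  exists k', index_eq (img (pfun c) K) k' /\ k * n = k' * m.
Proof.
move=> [[sA _] [[sB _] [cM [cI [cAB cS]]]]] sK KA hk hm hn.
have sI : subgroup (img (pfun c) K) by apply: img_sub sA cM _ sK KA.
split=> //.
have [s hs] := restrict sK KA (proj1 (index_eq_in _ _) hk).
have t1 := tower sA KA (proj1 (index_eq_in _ _) hm) hs.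
have ek := index_in_uniq sK (proj1 (index_eq_in _ _) hk) t1.
have tr := transport sA cM cI cAB cS KA hs.
have IB : forall y, img (pfun c) K y -> pcod c y.
  move=> _ [x [kx <-]]; apply: cAB; auto.
have t2 := tower sB IB (proj1 (index_eq_in _ _) hn) tr.
exists (n * s); split; first exact/index_eq_in.
rewrite ek mulnC [m * s]mulnC mulnA; done.
Qed.

Lemma logeq q k n k' m : 0 < k -> 0 < n -> 0 < k' -> 0 < m -> k * n = k' * m ->
  logn q k + logn q n = logn q k' + logn q m.
Proof. by move=> *; rewrite -!lognM //; congr logn. Qed.

Definition Sv q (c : Defs.pmap G) : Prop := forall m n,
  index_eq (pdom c) m -> index_eq (pcod c) n -> logn q m = logn q n.

Lemma comm_closed_Sv q : comm_closed (Sv q).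
Proof.
split; [|split].
- move=> c hc [K [[sK [k hk]] [KA Kid]]] m n hm hn.
  have [_ [k' [hk' e]]] := key hc sK KA hk hm hn.
  have hk2 : index_eq K k'.
    apply: idx_ext hk'=> y; split.
    + by move=> [x [kx <-]]; rewrite Kid.
    + by move=> ky; exists y; rewrite Kid.
  have ekk := idx_uniq sK hk hk2. rewrite -ekk in e.
  have := logeq q (idx_pos hk) (idx_pos hn) (idx_pos hk) (idx_pos hm) e. lia.
- move=> a b c ha hb hc Sa Sb [K [[sK [k hk]] [KA Kc]]] m n hm hn.
  have [[_ [ma hma]] [[_ [na hna]] _]] := ha.
  have [[_ [mb hmb]] [[_ [nb hnb]] _]] := hb.
  have KAa : forall x, K x -> pdom a x by move=> x /KA [_ []].
  have [sI1 [k1 [hk1 e1]]] := key ha sK KAa hk hma hna.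
  have I1B : forall y, img (pfun a) K y -> pdom b y by move=> _ [x [/KA [_ [_ h]] <-]].
  have [sI2 [k2 [hk2 e2]]] := key hb sI1 I1B hk1 hmb hnb.
  have KAc : forall x, K x -> pdom c x by move=> x /KA [].
  have [_ [k3 [hk3 e3]]] := key hc sK KAc hk hm hn.
  have hk3' : index_eq (img (pfun b) (img (pfun a) K)) k3.
    apply: idx_ext hk3=> y; split.
    + move=> [x [kx <-]]; exists (pfun a x); split; first by exists x.
      by rewrite (Kc x kx).
    + move=> [_ [[x [kx <-]] <-]]; exists x; split=> //; by rewrite (Kc x kx).
  have e32 := idx_uniq sI2 hk2 hk3'. rewrite -e32 in e3.
  have l1 := logeq q (idx_pos hk) (idx_pos hna) (idx_pos hk1) (idx_pos hma) e1.
  have l2 := logeq q (idx_pos hk1) (idx_pos hnb) (idx_pos hk2) (idx_pos hmb) e2.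
  have l3 := logeq q (idx_pos hk) (idx_pos hn) (idx_pos hk2) (idx_pos hm) e3.
  have := Sa _ _ hma hna; have := Sb _ _ hmb hnb. lia.
- move=> a c ha hc Sa [K [[sK [k hk]] [KA Kc]]] m n hm hn.
  have [[_ [ma hma]] [[_ [na hna]] _]] := ha.
  have KAa : forall x, K x -> pdom a x by move=> x /KA [].
  have [sI1 [k1 [hk1 e1]]] := key ha sK KAa hk hma hna.
  have I1B : forall y, img (pfun a) K y -> pdom c y by move=> _ [x [/KA [_ h] <-]].
  have [_ [k3 [hk3 e3]]] := key hc sI1 I1B hk1 hm hn.
  have hk3' : index_eq K k3.
    apply: idx_ext hk3=> y; split.
    + by move=> [_ [[x [kx <-]] <-]]; rewrite Kc.
    + move=> ky; exists (pfun a y); split; first by exists y.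
      by rewrite Kc.
  have e := idx_uniq sK hk hk3'. rewrite -e in e3.
  have l1 := logeq q (idx_pos hk) (idx_pos hna) (idx_pos hk1) (idx_pos hma) e1.
  have l3 := logeq q (idx_pos hk1) (idx_pos hn) (idx_pos hk) (idx_pos hm) e3.
  have := Sa _ _ hma hna. lia.
Qed.

End Grp.

Lemma logn_small q m : 0 < m -> m < q -> logn q m = 0.
Proof.
move=> m0 mq; rewrite lognE; case: (prime q) => //=; by rewrite m0 gtnNdvd.
Qed.

Theorem proposition2p8 (G : group) :
  unique_root G ->
  (forall N : nat, exists p : nat, N <= p /\ prime p /\
     exists H : G -> Prop, subgroup H /\ index_eq H p /\ iso_to_sub H) ->
  ~ comm_fin_gen G.
Proof.
move=> _ hinf [n [gens [hg hgen]]].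
have bound : forall n', n' <= n -> exists P, forall i, i < n' -> forall m,
    (index_eq (pdom (gens i)) m \/ index_eq (pcod (gens i)) m) -> m < P.
  elim=> [|n' IH] hn; first by exists 0.
  have [P hP] := IH (ltnW hn).
  have [[sD [m0 hm0]] [[sC [n0 hn0]] _]] := hg _ hn.
  exists (maxn P (maxn m0 n0)).+1 => i; rewrite ltnS leq_eqVlt => /orP [/eqP ->|hi] m.
  - case=> h.
    + rewrite (idx_uniq sD h hm0); lia.
    + rewrite (idx_uniq sC h hn0); lia.
  - move=> h; have := hP _ hi _ h; lia.
have [P hP] := bound n (leqnn n).
have [p [Pp [pp [H [sH [hH [f [fM [fI [fH fS]]]]]]]]]] := hinf P.
pose c := PMap (fun _ : G => True) H f.
have one1 : index_eq (fun _ : G => True) 1.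
  exists (fun _ => gone G); split; first by move=> x; exists 0.
  by case=> [|?] [|?].
have hc : commensuration c.
  split; [|split; [|split; [|split; [|split]]]] => //=.
  - split; last by exists 1. by split; [|split].
  - by split=> //; exists p.
  - by move=> x y _ _; apply: fI.
  - by move=> y /fS [x e]; exists x.
have := hgen c hc (fun c => Sv p c) (comm_closed_Sv G p).
move=> /(_ _) h.
have Sc : Sv p c.
  apply: h=> i hi m k hm hk.
  have m0 := idx_pos hm; have k0 := idx_pos hk.
  have mP := hP _ hi _ (or_introl hm); have kP := hP _ hi _ (or_intror hk).
  rewrite !logn_small //; lia.
have := Sc 1 p one1 hH.
rewrite logn1 lognE pp prime_gt0 // dvdnn divnn prime_gt0 // logn1 //.
Qed.
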